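(* Let $I$ be a dyadic interval with left half $I_l$ and right half $I_r$, and let $\Psi(x_1,\ldots,x_m)$ be a bounded measurable function. Then $$\sum_{\substack{S\subseteq\{1,\ldots,m\}\\|S|\ \text{even}}}\Big[\big\langle\Psi(x_1,\ldots,x_m)\big\rangle_{x_i\in I\ (i\in S)}\Big]_{x_i\in I\ (i\notin S)}=\frac12\big[\Psi(x_1,\ldots,x_m)\big]_{x_1,\ldots,x_m\in I_l}+\frac12\big[\Psi(x_1,\ldots,x_m)\big]_{x_1,\ldots,x_m\in I_r}.$$ In particular, if $\Psi\geq 0$, then the left-hand sum is nonnegative.
   Context: For a dyadic interval $I$ and integrable $f$, $[f(x)]_{x\in I}:=\frac{1}{|I|}\int_I f$ and $\langle f(x)\rangle_{x\in I}:=\frac{1}{|I|}\big(\int_{I_l}f-\int_{I_r}f\big)$; brackets with several subscripted variables denote iterated averages in each variable (for $[\cdot]_{x\in I_l}$ the average is over $I_l$). The sum includes $S=\emptyset$. *)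

(* Defs.v *)
From HB Require Import structures.
From mathcomp Require Import all_boot all_order all_algebra.
From mathcomp Require Import all_classical all_reals all_analysis.
Set Implicit Arguments. Unset Strict Implicit. Unset Printing Implicit Defensive.
Import Order.TTheory GRing.Theory Num.Theory.
Local Open Scope classical_set_scope.
Local Open Scope ring_scope.

Section Defs.
Variable R : realType.

Definition dlen (j : int) : R := (2 : R) ^ j.
Definition dleft (j k : int) : R := k%:~R * dlen j.
Definition dmid (j k : int) : R := dleft j k + dlen j / 2.
Definition dright (j k : int) : R := dleft j k + dlen j.

Definition Rint (a b : R) (f : R -> R) : R :=
  Rintegral (@lebesgue_measure R) `[a, b[ f.

Definition avg (a b : R) (f : R -> R) : R := (b - a)^-1 * Rint a b f.

Definition haar_avg (a b : R) (f : R -> R) : R :=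
  (b - a)^-1 * (Rint a ((a + b) / 2) f - Rint ((a + b) / 2) b f).

Definition upd (m : nat) (x : 'I_m -> R) (i : 'I_m) (t : R) : 'I_m -> R :=
  fun j => if j == i then t else x j.

(* Iterated one-variable operation [op] applied successively in the
   variables x_i, i in s (the first index of s is the outermost). The
   remaining variables are those of the point x. *)
Fixpoint iter_op (m : nat) (op : (R -> R) -> R) (s : seq 'I_m)
    (F : ('I_m -> R) -> R) (x : 'I_m -> R) : R :=
  match s with
  | [::] => F x
  | i :: s' => op (fun t => iter_op op s' F (upd x i t))
  end.

Definition mixed_avg (m : nat) (j k : int) (S : {set 'I_m})
    (Psi : ('I_m -> R) -> R) : R :=
  iter_op (avg (dleft j k) (dright j k)) (enum (~: S))
    (fun y => iter_op (haar_avg (dleft j k) (dright j k)) (enum S) Psi y)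
    (fun _ => 0).

Definition full_avg (m : nat) (a b : R) (Psi : ('I_m -> R) -> R) : R :=
  iter_op (avg a b) (enum 'I_m) Psi (fun _ => 0).

(* Measurability of Psi : R^m -> R w.r.t. the product Borel sigma-algebra
   on R^m (generated by the cylinders {x | x i in A}, A Borel) *)
Definition cylinders (m : nat) : set (set ('I_m -> R)) :=
  [set C | exists i : 'I_m, exists A : set R,
       measurable A /\ C = [set x | A (x i)]].

Definition measurable_Rn (m : nat) (Psi : ('I_m -> R) -> R) : Prop :=
  forall B : set R, measurable B ->
    smallest (sigma_algebra setT) (@cylinders m) (Psi @^-1` B).

Definition bounded_Rn (m : nat) (Psi : ('I_m -> R) -> R) : Prop :=
  exists M : R, forall x, `|Psi x| <= M.

End Defs.
Arguments dlen {R}. Arguments dleft {R}. Arguments dmid {R}. Arguments dright {R}.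

(* Main.v *)
Require Import Defs.
From HB Require Import structures.
From mathcomp Require Import all_boot all_order all_algebra.
From mathcomp Require Import all_classical all_reals all_analysis.
From mathcomp Require Import ring lra.
Import Order.TTheory GRing.Theory Num.Theory.
Import numFieldNormedType.Exports.
Local Open Scope classical_set_scope.
Local Open Scope ring_scope.
Set Implicit Arguments. Unset Strict Implicit. Unset Printing Implicit Defensive.

Section Gen.
Context {R : realType}.
Notation mu := (@lebesgue_measure R).

Definition intg (a b : R) (f : R -> R) := mu.-integrable `[a, b[ (EFin \o f).
Definition ig (f : R -> R) := forall a b, intg a b f.

Lemma mitv (a b : R) : measurable (`[a, b[ : set R).
Proof. exact: measurable_itv. Qed.

Lemma itv_fin (a b : R) : (mu `[a, b[ < +oo)%E.
Proof.
rewrite lebesgue_measure_itv/=; case: ifPn => _ //; by rewrite -EFinB ltry.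
Qed.

Lemma ig_bdd (f : R -> R) (M : R) : measurable_fun setT f ->
  (forall t, `|f t| <= M) -> ig f.
Proof.
move=> mf hM a b; rewrite /intg. apply: (@measurable_bounded_integrable _ _ _ mu f _ (mitv a b)).
- exact: itv_fin.
- exact: measurable_funS mf.
- rewrite /bounded_near; near=> y => x _ /=.
  apply: le_trans (hM x) _; near: y; exact: (nbhs_pinfty_ge (num_real M)).
Unshelve. all: by end_near.
Qed.

Lemma igD f g : ig f -> ig g -> ig (fun t => f t + g t).
Proof.
move=> hf hg a b; rewrite /intg.
have -> : (EFin \o (fun t => f t + g t)) = ((EFin \o f) \+ (EFin \o g))%E by [].
by apply: integrableD; [exact: mitv|exact: hf|exact: hg].
Qed.

Lemma igZ c f : ig f -> ig (fun t => c * f t).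
Proof.
move=> hf a b; rewrite /intg.
have -> : (EFin \o (fun t => c * f t)) = (fun t => c%:E * (EFin \o f) t)%E by [].
by apply: integrableZl; [exact: mitv|exact: hf].
Qed.

Lemma ig_sum (I : Type) (r : seq I) (P : pred I) (g : I -> R -> R) :
  (forall k, P k -> ig (g k)) -> ig (fun t => \sum_(k <- r | P k) g k t).
Proof.
move=> hg a b; rewrite /intg.
have -> : (EFin \o (fun t => \sum_(k <- r | P k) g k t)) =
   (fun t => \sum_(k <- r | P k) (g k t)%:E)%E.
  by apply/funext => t /=; rewrite -sumEFin.
by apply: integrable_sum; [exact: mitv| move=> k Pk; exact: hg].
Qed.

Lemma Rint_sum (I : Type) (r : seq I) (P : pred I) (c : I -> R) (g : I -> R -> R) a b :
  (forall k, P k -> ig (g k)) ->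
  Defs.Rint a b (fun t => \sum_(k <- r | P k) c k * g k t) =
  \sum_(k <- r | P k) c k * Defs.Rint a b (g k).
Proof.
move=> hg; elim: r => [|k r IH].
  rewrite big_nil /Defs.Rint.
  rewrite (@eq_Rintegral _ _ _ mu _ (fun _ => 0)); last by move=> t _; rewrite big_nil.
  by rewrite Rintegral_cst ?mul0r//; exact: mitv.
rewrite big_cons; case: ifPn => Pk; last first.
  by rewrite -IH; apply: eq_Rintegral => t _; rewrite big_cons (negbTE Pk).
rewrite -IH /Defs.Rint.
transitivity (\int[mu]_(t in `[a, b[) (c k * g k t + \sum_(k0 <- r | P k0) c k0 * g k0 t)).
  by apply: eq_Rintegral => t _ /=; rewrite big_cons Pk.
have h1 := igZ (c k) (hg k Pk) a b.
have h2 : intg a b (fun t => \sum_(k0 <- r | P k0) c k0 * g k0 t).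
  by apply: ig_sum => i Pi; exact: igZ (hg i Pi).
rewrite RintegralD //.
by rewrite RintegralZl //; exact: hg.
Qed.

End Gen.

Section Fub.
Context {R : realType}.
Notation mu := (@lebesgue_measure R).

Lemma Rint_restr (f : R -> R) c d : intg c d f ->
  ((Defs.Rint c d f)%:E = \int[mu]_t (((EFin \o f) \_ `[c, d[) t))%E.
Proof.
move=> hf; rewrite /Defs.Rint /Rintegral fineK; first exact: integral_mkcond.
by apply: integrable_fin_num => //; exact: hf.
Qed.

Lemma Rint_mk (f : R -> R) a b :
  Defs.Rint a b f = fine (\int[mu]_s (((EFin \o f) \_ `[a, b[) s))%E.
Proof. by rewrite /Defs.Rint /Rintegral integral_mkcond. Qed.

Lemma Rint_fubini (H : R * R -> R) (M : R) a b c d :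
  measurable_fun setT H -> (forall p, `|H p| <= M) ->
  Defs.Rint a b (fun s => Defs.Rint c d (fun t => H (s, t))) =
  Defs.Rint c d (fun t => Defs.Rint a b (fun s => H (s, t))).
Proof.
move=> mH hM.
have M0 : 0 <= M by apply: le_trans (hM (0, 0)).
have ms s : measurable_fun setT (fun t => H (s, t)).
  exact: measurableT_comp mH (pair1_measurable s).
have mt t : measurable_fun setT (fun s => H (s, t)).
  exact: measurableT_comp mH (pair2_measurable t).
have igs s : ig (fun t => H (s, t)) by apply: ig_bdd (ms s) _ => t; exact: hM.
have igt t : ig (fun s => H (s, t)) by apply: ig_bdd (mt t) _ => s; exact: hM.
pose D := [set` `[a, b[]; pose E := [set` `[c, d[].
pose K := ((EFin \o H) \_ (D `*` E))%E.
have iK : (mu \x mu)%E.-integrable setT K.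
  rewrite /K -integrable_mkcond; last exact: measurableX (mitv a b) (mitv c d).
  apply/integrableP; split.
    apply/measurable_realfun.measurable_EFinP; exact: measurable_funS mH.
  apply: (le_lt_trans (integral_le_bound M%:E _ _ _ _)).
  - exact: measurableX (mitv a b) (mitv c d).
  - apply/measurable_realfun.measurable_EFinP; exact: measurable_funS mH.
  - by rewrite lee_fin.
  - by apply: aeW => p _ /=; rewrite lee_fin hM.
  set X := (X in (_ * X < _)%E). have -> : X = (mu D * mu E)%E by rewrite /X; apply: product_measure1E; exact: mitv.
  rewrite !lebesgue_measure_itv/=.
  by case: ifPn => _; case: ifPn => _; rewrite -?EFinB -?EFinM ?ltry ?mule0 ?mul0e ?ltry.
have K1 s : (((EFin \o (fun s => Defs.Rint c d (fun t => H (s, t)))) \_ D) s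
    = \int[mu]_t K (s, t))%E.
  rewrite /K /patch /=; case: ifPn => sD.
    rewrite Rint_restr; last exact: igs.
    by apply: eq_integral => t _; rewrite /patch in_setX sD.
  rewrite [LHS](_ : _ = 0%E) // -(integral0 mu setT); apply: eq_integral => t _.
  by rewrite in_setX (negbTE sD).
have K2 t : (((EFin \o (fun t => Defs.Rint a b (fun s => H (s, t)))) \_ E) t
    = \int[mu]_s K (s, t))%E.
  rewrite /K /patch /=; case: ifPn => tE.
    rewrite Rint_restr; last exact: igt.
    by apply: eq_integral => s _; rewrite /patch in_setX tE andbT.
  rewrite [LHS](_ : _ = 0%E) // -(integral0 mu setT); apply: eq_integral => s _.
  by rewrite in_setX (negbTE tE) andbF.
rewrite (Rint_mk (fun s => Defs.Rint c d (fun t => H (s, t)))).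
rewrite (Rint_mk (fun t => Defs.Rint a b (fun s => H (s, t)))).
congr fine.
transitivity (\int[mu]_s \int[mu]_t K (s, t))%E.
  by apply: eq_integral => s _; exact: K1.
transitivity (\int[mu]_t \int[mu]_s K (s, t))%E; first exact: Fubini iK.
by apply: eq_integral => t _; rewrite K2.
Qed.
End Fub.

Section Good.
Context {R : realType} (m : nat).
Notation mu := (@lebesgue_measure R).
Notation V := ('I_m -> R).

Definition cmeas d (T : measurableType d) (phi : T -> V) :=
  forall i, measurable_fun setT (fun y => phi y i).

Definition good (G : V -> R) :=
  (exists M, forall x, `|G x| <= M) /\
  forall d (T : measurableType d) (phi : T -> V), cmeas phi ->
    measurable_fun setT (G \o phi).

Lemma cmeas_upd d (T : measurableType d) (phi : T -> V) (g : T -> R) i :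
  cmeas phi -> measurable_fun setT g -> cmeas (fun y => upd (phi y) i (g y)).
Proof. by move=> hp hg j; rewrite /upd; case: (j == i). Qed.

Lemma cmeas_cst d (T : measurableType d) (x : V) : cmeas (fun _ : T => x).
Proof. by move=> j; exact: measurable_cst. Qed.

Lemma cmeas_fst d d' (T : measurableType d) (T' : measurableType d') (phi : T -> V) :
  cmeas phi -> cmeas (fun p : T * T' => phi p.1).
Proof. by move=> hp j; exact: measurableT_comp (hp j) measurable_fst. Qed.

Lemma good_Psi (Psi : V -> R) : measurable_Rn Psi -> bounded_Rn Psi -> good Psi.
Proof.
move=> hm hb; split => // d T phi hphi _ B mB; rewrite setTI.
have hS := hm B mB.
apply: (hS [set A | measurable (phi @^-1` A)]); split; last first.
  move=> _ [i [A [mA ->]]] /=.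
  by have := hphi i measurableT A mA; rewrite setTI.
split.
- by rewrite /= preimage_set0; exact: measurable0.
- move=> A /= hA; rewrite setTD -preimage_setC; exact: measurableC.
- move=> A /= hA; rewrite preimage_bigcup; exact: bigcupT_measurable.
Qed.

Lemma good_sum (I : Type) (r : seq I) (P : pred I) (c : I -> R) (G : I -> V -> R) :
  (forall k, P k -> good (G k)) ->
  good (fun x => \sum_(k <- r | P k) c k * G k x).
Proof.
move=> hG; elim: r => [|k r [[M hM] IHm]].
  split; first by exists 0 => x; rewrite big_nil normr0.
  move=> d T phi _; rewrite /comp; under eq_fun do rewrite big_nil.
  exact: measurable_cst.
case: (boolP (P k)) => Pk; last first.
  split; first by exists M => x; rewrite big_cons (negbTE Pk).
  move=> d T phi hphi; rewrite /comp; under eq_fun do rewrite big_cons (negbTE Pk).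
  exact: IHm.
have [[Mk hMk] mk] := hG k Pk.
split.
  exists (`|c k| * Mk + M) => x; rewrite big_cons Pk.
  apply: le_trans (ler_normD _ _) _; apply: lerD => //.
  by rewrite normrM ler_wpM2l.
move=> d T phi hphi; rewrite /comp; under eq_fun do rewrite big_cons Pk.
apply: measurable_realfun.measurable_funD; last exact: IHm.
apply: measurable_realfun.measurable_funM; first exact: measurable_cst.
exact: mk.
Qed.

Lemma good_sec (G : V -> R) (x : V) i : good G ->
  measurable_fun setT (fun t => G (upd x i t)).
Proof.
move=> [_ hG]; have := hG _ _ (fun t : R => upd x i t).
by apply; apply: cmeas_upd; [exact: cmeas_cst|exact: measurable_id].
Qed.

Lemma good_ig (G : V -> R) (x : V) i : good G -> ig (fun t => G (upd x i t)).
Proof.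
move=> hG; have [[M hM] _] := hG.
by apply: ig_bdd (good_sec x i hG) _ => t; exact: hM.
Qed.

Lemma meas_param d (T : measurableType d) (H : T * R -> R) (M : R) a b :
  measurable_fun setT H -> (forall p, `|H p| <= M) ->
  measurable_fun setT (fun y => Defs.Rint a b (fun t => H (y, t))).
Proof.
move=> mH hM.
have igy y : ig (fun t => H (y, t) + M).
  apply: (@ig_bdd _ _ (M + M)) => [|t].
    apply: measurable_realfun.measurable_funD; last exact: measurable_cst.
    exact: measurableT_comp mH (pair1_measurable y).
  move: (hM (y, t)); rewrite ler_norml => /andP[h1 h2]. rewrite ler_norml; apply/andP; split; lra.
pose D := [set` `[a, b[] : set R.
pose k := fun p : T * R => (H p + M) * \1_D p.2.
pose K := EFin \o k.
have mk : measurable_fun setT k.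
  apply: measurable_realfun.measurable_funM.
    by apply: measurable_realfun.measurable_funD; [exact: mH|exact: measurable_cst].
  apply: measurableT_comp measurable_snd.
  by apply: measurable_realfun.measurable_indic; exact: mitv.
have mK := (measurable_realfun.measurable_EFinP setT k).2 mk.
have K0 p : (0 <= K p)%E.
  rewrite lee_fin; apply: mulr_ge0; last by rewrite indicE.
  by move: (hM p); rewrite ler_norml => /andP[h1 _]; lra.
have Fm := measurable_fun_fubini_tonelli_F (m2 := mu) K mK K0.
have e1 : (EFin \o (fun y => Defs.Rint a b (fun t => H (y, t) + M))) = fubini_F mu K.
  apply/funext => y /=; rewrite Rint_restr; last exact: igy.
  apply: eq_integral => t _; rewrite /K /k /patch /=. rewrite /D indicE.
  by case: ifPn => _ /=; rewrite ?mulr1 ?mulr0.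
have m1 : measurable_fun setT (fun y => Defs.Rint a b (fun t => H (y, t) + M)).
  by apply/measurable_realfun.measurable_EFinP; rewrite e1.
have e2 y : Defs.Rint a b (fun t => H (y, t)) =
    Defs.Rint a b (fun t => H (y, t) + M) - M * fine (mu D).
  have i1 : intg a b (fun t => H (y, t)).
    by apply: (ig_bdd (measurableT_comp mH (pair1_measurable y))) => t; exact: hM.
  have i2 : intg a b (fun _ => M).
    by apply: (@ig_bdd _ _ `|M|) => [|t]; [exact: measurable_cst|exact: lexx].
  rewrite /Defs.Rint RintegralD //.
  by rewrite Rintegral_cst ?addrK //; exact: mitv.
rewrite (_ : (fun y => _) = (fun y => Defs.Rint a b (fun t => H (y, t) + M) - M * fine (mu D))).
  by apply: measurable_realfun.measurable_funB => //; exact: measurable_cst.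
by apply/funext => y; exact: e2.
Qed.

Lemma Rint_bound (f : R -> R) (M : R) a b : measurable_fun setT f ->
  (forall t, `|f t| <= M) -> `|Defs.Rint a b f| <= M * fine (mu `[a, b[).
Proof.
move=> mf hM.
have i1 : intg a b f by exact: (ig_bdd mf hM).
have i2 : intg a b (fun _ => M).
  by apply: (@ig_bdd _ _ `|M|) => [|t]; [exact: measurable_cst|exact: lexx].
rewrite /Defs.Rint; apply: le_trans; first by apply: le_normr_Rintegral => //.
rewrite -Rintegral_cst; last exact: mitv.
apply: le_Rintegral => //.
exact: integrable_norm.
Qed.

Lemma good_int (G : V -> R) a b i : good G ->
  good (fun x => Defs.Rint a b (fun t => G (upd x i t))).
Proof.
move=> hG; have [[M hM] mG] := hG.
split.
  exists (M * fine (mu `[a, b[)) => x.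
  by apply: Rint_bound => //; exact: good_sec.
move=> d T phi hphi; rewrite /comp.
apply: (@meas_param _ _ (fun p : T * R => G (upd (phi p.1) i p.2)) M).
  apply: (mG _ _ (fun p : T * R => upd (phi p.1) i p.2)).
  by apply: cmeas_upd; [exact: cmeas_fst | exact: measurable_snd].
by move=> p; exact: hM.
Qed.

End Good.

Section Comb.
Context {R : realType} (m : nat).
Notation mu := (@lebesgue_measure R).
Notation V := ('I_m -> R).

Definition gop (op : (R -> R) -> R) := exists l : seq (R * R * R),
  forall f, op f = \sum_(p <- l) p.1.1 * Defs.Rint p.1.2 p.2 f.

Lemma gop_good op i (G : V -> R) : gop op -> good G ->
  good (fun x => op (fun t => G (upd x i t))).
Proof.
move=> [l hl] hG.
rewrite (_ : (fun x => _) = (fun x => \sum_(p <- l | true) p.1.1 *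
   (fun y => Defs.Rint p.1.2 p.2 (fun t => G (upd y i t))) x)); last first.
  by apply/funext => x; rewrite hl.
by apply: good_sum => p _; exact: good_int.
Qed.

Lemma gop_lin op (I : Type) (r : seq I) (P : pred I) (c : I -> R) (g : I -> R -> R) :
  gop op -> (forall k, P k -> ig (g k)) ->
  op (fun t => \sum_(k <- r | P k) c k * g k t) = \sum_(k <- r | P k) c k * op (g k).
Proof.
move=> [l hl] hg; rewrite hl.
under eq_bigr => p _ do rewrite (Rint_sum r c p.1.2 p.2 hg) mulr_sumr.
rewrite exchange_big /=; apply: eq_bigr => k Pk.
by rewrite hl mulr_sumr; apply: eq_bigr => p _; rewrite mulrCA.
Qed.

Lemma upd_swap (x : V) i j t u : i != j ->
  upd (upd x i t) j u = upd (upd x j u) i t.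
Proof.
move=> ij; apply/funext => k; rewrite /upd.
case: (eqVneq k j) => [->|kj]; first by rewrite eq_sym (negbTE ij).
by case: (eqVneq k i).
Qed.

Lemma gop_swap o1 o2 (G : V -> R) (x : V) i j : gop o1 -> gop o2 -> good G -> i != j ->
  o1 (fun t => o2 (fun u => G (upd (upd x i t) j u))) =
  o2 (fun u => o1 (fun t => G (upd (upd x j u) i t))).
Proof.
move=> go1 go2 hG ij; have [l1 h1] := go1; have [l2 h2] := go2.
have [[M hM] mG] := hG.
under eq_fun do under eq_fun do rewrite upd_swap //.
pose H := fun p : R * R => G (upd (upd x j p.1) i p.2).
have mH : measurable_fun setT H.
  apply: (mG _ _ (fun p : R * R => upd (upd x j p.1) i p.2)).
  apply: cmeas_upd; last exact: measurable_snd.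
  apply: cmeas_upd; last exact: measurable_fst.
  exact: cmeas_cst.
rewrite (_ : (fun t => o2 _) = (fun t => \sum_(q <- l2 | true) q.1.1 *
   (fun t => Defs.Rint q.1.2 q.2 (fun u => H (u, t))) t)); last first.
  by apply/funext => t; rewrite h2.
rewrite gop_lin //; last first.
  move=> q _; rewrite /H /=.
  under eq_fun do under eq_fun do rewrite -upd_swap //.
  exact: (good_ig _ _ (good_int q.1.2 q.2 j hG)).
rewrite h2; apply: eq_bigr => q _; congr (_ * _).
rewrite h1.
under eq_bigr => p _ do rewrite -(Rint_fubini q.1.2 q.2 p.1.2 p.2 mH (fun p => hM _)).
rewrite -Rint_sum; last first.
  by move=> p _; exact: (good_ig _ _ (good_int p.1.2 p.2 i hG)).
congr Defs.Rint; apply/funext => u; rewrite h1 //.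
Qed.

Fixpoint iterF (o : 'I_m -> (R -> R) -> R) (s : seq 'I_m) (F : V -> R) (x : V) : R :=
  match s with
  | [::] => F x
  | i :: s' => o i (fun t => iterF o s' F (upd x i t))
  end.

Lemma good_iterF o s F : (forall i, gop (o i)) -> good F -> good (iterF o s F).
Proof.
move=> ho hF; elim: s => [|i s IH] //=.
exact: (gop_good i (ho i) IH).
Qed.

Lemma iterF_ext_in o1 o2 s F x : (forall i, i \in s -> o1 i = o2 i) ->
  iterF o1 s F x = iterF o2 s F x.
Proof.
elim: s x => [|i s IH] x h //=.
rewrite h ?mem_head //; congr (o2 i); apply/funext => t.
by apply: IH => k ks; apply: h; rewrite in_cons ks orbT.
Qed.

Lemma iterF_ext_op o1 o2 s F x : (forall i, gop (o1 i)) -> good F ->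
  (forall i, i \in s -> forall f, ig f -> o1 i f = o2 i f) ->
  iterF o1 s F x = iterF o2 s F x.
Proof.
move=> ho hF; elim: s x => [|i s IH] x h //=.
rewrite h ?mem_head //; last exact: good_ig (good_iterF s ho hF).
congr (o2 i); apply/funext => t.
by apply: IH => k ks; apply: h; rewrite in_cons ks orbT.
Qed.

Lemma iter_op_iterF op s F x : iter_op op s F x = iterF (fun _ => op) s F x.
Proof.
elim: s x => [|i s IH] x //=; congr op; apply/funext => t; exact: IH.
Qed.

Lemma iterF_cat o s1 s2 F x : iterF o (s1 ++ s2) F x = iterF o s1 (iterF o s2 F) x.
Proof.
elim: s1 x => [|i s IH] x //=; congr (o i); apply/funext => t; exact: IH.
Qed.

Lemma iterF_front o s1 i s2 F x : (forall k, gop (o k)) -> good F -> i \notin s1 ->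
  iterF o (s1 ++ i :: s2) F x = iterF o (i :: s1 ++ s2) F x.
Proof.
move=> ho hF; elim: s1 x => [|j s1 IH] x //= hi.
rewrite in_cons negb_or in hi; case/andP: hi => ij hi.
rewrite (_ : (fun t => _) = (fun t => iterF o (i :: s1 ++ s2) F (upd x j t))); last first.
  by apply/funext => t; exact: IH.
rewrite /=.
have hG := good_iterF (s1 ++ s2) ho hF.
rewrite eq_sym in ij.
have -> := gop_swap x (ho j) (ho i) hG ij. congr (o i); apply/funext => t; congr (o j); apply/funext => u.
Qed.

Lemma iterF_perm o s t F x : (forall k, gop (o k)) -> good F -> uniq s -> perm_eq s t ->
  iterF o s F x = iterF o t F x.
Proof.
move=> ho hF; elim: s t x => [|i s IH] t x us pst.
  by move: pst; rewrite perm_sym => /perm_nilP ->.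
have it : i \in t by rewrite -(perm_mem pst) mem_head.
move: pst; case/splitPr: it => t1 t2 pst.
have ut : uniq (t1 ++ i :: t2) by rewrite -(perm_uniq pst).
rewrite iterF_front //; last first.
  by move: ut; rewrite cat_uniq /= => /and3P[_ /norP[] ].
rewrite /=; congr (o i); apply/funext => u.
apply: IH; first by case/andP: us.
rewrite -(perm_cons i); apply: perm_trans pst _.
by rewrite -[i :: t2]cat1s perm_catCA.
Qed.

End Comb.

Section Main.
Context {R : realType} (m : nat).
Notation V := ('I_m -> R).

Lemma split_sub (g : {set 'I_m} -> R) (B : {set 'I_m}) i : i \notin B ->
  \sum_(S : {set 'I_m} | S \subset i |: B) g S =
  \sum_(S : {set 'I_m} | S \subset B) g S + \sum_(S : {set 'I_m} | S \subset B) g (i |: S).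
Proof.
move=> iB; rewrite (bigID (fun S : {set 'I_m} => i \in S)) /= addrC; congr (_ + _).
  apply: eq_bigl => S; apply/idP/idP.
    case/andP => /fintype.subsetP hS iS; apply/fintype.subsetP => x xS.
    have := hS x xS; rewrite in_setU1 => /orP[/eqP xi|//].
    by move: iS; rewrite -xi xS.
  move=> SB; rewrite (fintype.subset_trans SB (finset.subsetUr _ _)) /=.
  by apply: contra iB => iS; exact: (fintype.subsetP SB).
rewrite (reindex_onto (fun S : {set 'I_m} => i |: S) (fun S : {set 'I_m} => S :\ i)); last first.
  by move=> S /andP[_ iS]; exact: finset.setD1K.
apply: eq_bigl => S; apply/idP/idP.
  case/andP => /andP[hS _] /eqP hE; rewrite -hE; apply/fintype.subsetP => x.
  rewrite !inE => /andP[xi xS].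
  move: xS; rewrite (negbTE xi) /= => xS.
  by move/fintype.subsetP: hS => /(_ x); rewrite !inE (negbTE xi) /= => /(_ xS).
move=> SB; have iS : i \notin S by apply: contra iB => iS; exact: (fintype.subsetP SB).
by rewrite finset.setU1K // eqxx finset.setUS // finset.setU11.
Qed.

Definition opS (A H : (R -> R) -> R) (S : {set 'I_m}) : 'I_m -> (R -> R) -> R :=
  fun i => if i \in S then H else A.

Lemma gop_opS A H S i : gop A -> gop H -> gop (opS A H S i).
Proof. by rewrite /opS; case: (i \in S). Qed.

Lemma sub_sum A H (sg : R) s (F : V -> R) x : gop A -> gop H -> good F -> uniq s ->
  \sum_(S : {set 'I_m} | S \subset [set:: s]) sg ^+ #|S| * iterF (opS A H S) s F x
  = iterF (fun _ => fun f => A f + sg * H f) s F x.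
Proof.
move=> gA gH hF; elim: s x => [|i s IH] x us.
  rewrite finset.set_nil (big_pred1 (finset.set0 : {set 'I_m})); last by move=> S; rewrite /= finset.subset0.
  by rewrite finset.cards0 expr0 mul1r.
have [iS us'] : i \notin s /\ uniq s by case/andP: us.
have iB : i \notin [set:: s] by rewrite inE.
rewrite finset.set_cons split_sub //=.
have gS S : good (iterF (opS A H S) s F) by apply: good_iterF => // k; exact: gop_opS.
transitivity (\sum_(S : {set 'I_m} | S \subset [set:: s]) sg ^+ #|S| *
     A (fun t => iterF (opS A H S) s F (upd x i t)) +
   sg * \sum_(S : {set 'I_m} | S \subset [set:: s]) sg ^+ #|S| *
     H (fun t => iterF (opS A H S) s F (upd x i t))).
  congr (_ + _).
    apply: eq_bigr => S SB; rewrite /opS ifF //.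
    by apply: contraNF iB => iS'; exact: (fintype.subsetP SB).
  rewrite mulr_sumr; apply: eq_bigr => S SB.
  have iS' : i \notin S by apply: contra iB => iS'; exact: (fintype.subsetP SB).
  rewrite finset.cardsU1 iS' add1n exprS -mulrA; congr (_ * (_ * _)).
  rewrite /opS finset.setU11; congr H; apply/funext => t; apply: iterF_ext_in => k ks.
  rewrite /opS finset.in_setU1; suff -> : (k == i) = false by [].
  by apply/eqP => ki; move: iS; rewrite -ki ks.
have hg : forall S : {set 'I_m}, S \subset [set:: s] ->
    ig (fun t => iterF (opS A H S) s F (upd x i t)).
  by move=> S _; exact: good_ig (gS S).
rewrite -(gop_lin (index_enum _) (fun S : {set 'I_m} => sg ^+ #|S|) gA hg).
rewrite -(gop_lin (index_enum _) (fun S : {set 'I_m} => sg ^+ #|S|) gH hg).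
congr (A _ + sg * H _); apply/funext => t; exact: IH.
Qed.

Lemma gop_avg (a b : R) : gop (avg a b).
Proof. by exists [:: ((b - a)^-1, a, b)] => f; rewrite big_seq1. Qed.

Lemma gop_haar (a b : R) : gop (haar_avg a b).
Proof.
exists [:: ((b - a)^-1, a, (a + b) / 2); (- (b - a)^-1, (a + b) / 2, b)] => f.
by rewrite big_cons big_seq1 /haar_avg /= mulrBr mulNr.
Qed.

Lemma gop_comb (A H : (R -> R) -> R) (sg : R) : gop A -> gop H -> gop (fun f => A f + sg * H f).
Proof.
move=> [l1 h1] [l2 h2].
exists (l1 ++ map (fun p => (sg * p.1.1, p.1.2, p.2)) l2) => f.
rewrite big_cat big_map h1 h2 mulr_sumr; congr (_ + _).
by apply: eq_bigr => p _; rewrite mulrA.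
Qed.

Lemma Rint_split (a c b : R) f : a <= c -> c <= b -> intg a b f ->
  Defs.Rint a b f = Defs.Rint a c f + Defs.Rint c b f.
Proof.
move=> ac cb hf.
have E : [set` `[a, b[] = [set` `[a, c[] `|` [set` `[c, b[] :> set R.
  by apply: itv_bndbnd_setU; rewrite bnd_simp.
rewrite /intg E in hf; rewrite /Defs.Rint E Rintegral_setU //.
rewrite /disj_set; apply/eqP; apply/seteqP; split => // x [] /=.
rewrite !in_itv /= => /andP[_ xc] /andP[cx _].
by move: (lt_le_trans xc cx); rewrite ltxx.
Qed.

Lemma ident (a h : R) (f : R -> R) : 0 < h -> ig f ->
  avg a (a + h) f + 1 * haar_avg a (a + h) f = avg a (a + h / 2) f /\
  avg a (a + h) f + (-1) * haar_avg a (a + h) f = avg (a + h / 2) (a + h) f.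
Proof.
move=> h0 hf.
rewrite /avg /haar_avg.
have -> : (a + (a + h)) / 2 = a + h / 2 by field.
rewrite (Rint_split (c := a + h / 2)); first last.
- exact: hf.
- lra.
- lra.
have -> : a + h - a = h by ring.
have -> : a + h / 2 - a = h / 2 by ring.
have -> : a + h - (a + h / 2) = h / 2 by field.
have hn : h != 0 by rewrite gt_eqF.
by split; field.
Qed.

Lemma iter_op_ge0 (op : (R -> R) -> R) s (F : V -> R) x :
  (forall f, (forall t, 0 <= f t) -> 0 <= op f) -> (forall y, 0 <= F y) ->
  0 <= iter_op op s F x.
Proof.
move=> hop hF; elim: s x => [|i s IH] x //=; apply: hop => t; exact: IH.
Qed.

End Main.

Lemma mixed_iterF {R : realType} (m : nat) (j k : int) (S : {set 'I_m})
    (Psi : ('I_m -> R) -> R) : good Psi ->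
  mixed_avg j k S Psi =
  iterF (opS (avg (dleft j k) (dright j k)) (haar_avg (dleft j k) (dright j k)) S)
    (enum 'I_m) Psi (fun _ => 0).
Proof.
move=> hP.
pose A := avg (dleft j k) (dright j k : R).
pose H := haar_avg (dleft j k) (dright j k : R).
have go i : gop (opS A H S i) by apply: gop_opS; [exact: gop_avg|exact: gop_haar].
rewrite /mixed_avg -/A -/H iter_op_iterF.
rewrite (_ : (fun y => _) = iterF (opS A H S) (enum S) Psi); last first.
  apply/funext => y; rewrite iter_op_iterF; apply: iterF_ext_in => i.
  by rewrite mem_enum /opS => ->.
rewrite (@iterF_ext_in _ _ _ (opS A H S)); last first.
  by move=> i; rewrite mem_enum /opS inE => /negbTE ->.
rewrite -iterF_cat; apply: iterF_perm => //.
  rewrite cat_uniq !enum_uniq /= andbT; apply/hasPn => x.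
  by rewrite !mem_enum inE => ->.
apply: uniq_perm.
- rewrite cat_uniq !enum_uniq /= andbT; apply/hasPn => x.
  by rewrite !mem_enum inE => ->.
- exact: enum_uniq.
by move=> x; rewrite mem_cat !mem_enum inE orNb.
Qed.

Unset Implicit Arguments.

Theorem lemma1 (R : realType) (m : nat) (j k : int)
    (Psi : ('I_m -> R) -> R)
    (Psi_meas : measurable_Rn Psi) (Psi_bdd : bounded_Rn Psi) :
  \sum_(S : {set 'I_m} | ~~ odd #|S|) mixed_avg j k S Psi
    = 2^-1 * full_avg (dleft j k) (dmid j k) Psi
      + 2^-1 * full_avg (dmid j k) (dright j k) Psi
  /\ ((forall x, 0 <= Psi x) ->
      0 <= \sum_(S : {set 'I_m} | ~~ odd #|S|) mixed_avg j k S Psi).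
Proof.
have hP := good_Psi Psi_meas Psi_bdd.
pose a : R := dleft j k; pose h : R := dlen j.
have h0 : 0 < h by apply: exprz_gt0.
have eb : dright j k = a + h by [].
have ec : dmid j k = a + h / 2 by [].
pose A := avg (dleft j k) (dright j k : R).
pose H := haar_avg (dleft j k) (dright j k : R).
have gA : gop A by exact: gop_avg.
have gH : gop H by exact: gop_haar.
pose X S := iterF (opS A H S) (enum 'I_m) Psi (fun _ => 0).
have sub sg : \sum_(S : {set 'I_m}) sg ^+ #|S| * X S =
    iterF (fun _ => fun f => A f + sg * H f) (enum 'I_m) Psi (fun _ => 0).
  rewrite -sub_sum //; last exact: enum_uniq.
  apply: eq_bigl => S; apply/esym/fintype.subsetP => x _.
  by rewrite inE mem_enum.
have key : \sum_(S : {set 'I_m} | ~~ odd #|S|) mixed_avg j k S Psi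
    = 2^-1 * full_avg (dleft j k) (dmid j k) Psi
      + 2^-1 * full_avg (dmid j k) (dright j k) Psi.
  transitivity (2^-1 * (\sum_(S : {set 'I_m}) 1 ^+ #|S| * X S)
      + 2^-1 * (\sum_(S : {set 'I_m}) (-1) ^+ #|S| * X S)).
    rewrite !mulr_sumr -big_split big_mkcond /=; apply: eq_bigr => S _.
    rewrite mixed_iterF // -/A -/H -/(X S) expr1n -signr_odd.
    by case: (odd #|S|) => /=; rewrite ?expr1 ?expr0; field.
  rewrite !sub /full_avg !iter_op_iterF; congr (_ * _ + _ * _).
    apply: iterF_ext_op => //.
    - by move=> i; apply: gop_comb.
    - by move=> i _ f hf; rewrite /A /H eb ec; case: (ident a h0 hf).
    apply: iterF_ext_op => //.
    - by move=> i; apply: gop_comb.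
    - by move=> i _ f hf; rewrite /A /H eb ec; case: (ident a h0 hf).
split => // Psi0; rewrite key.
have h2 : 0 <= (2 : R)^-1 by rewrite invr_ge0.
have pos (a' c' : R) : a' <= c' -> 0 <= full_avg a' c' Psi.
  move=> ac; apply: iter_op_ge0 => // f f0; rewrite /avg.
  apply: mulr_ge0; first by rewrite invr_ge0 subr_ge0.
  by apply: Rintegral_ge0 => t _; exact: f0.
apply: addr_ge0; apply: mulr_ge0 => //; apply: pos; rewrite ?eb ?ec -/a; lra.
Qed.
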